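(* There is a universal constant $C_{\mathrm{hg}}>1$ such that the following holds. Let $m_1,k,s$ be positive integers and let $T_0,T_1,\dots,T_k$ be independent random subsets of $[m_1]$, where $T_0$ is uniformly distributed among subsets of size $s_0$, and for $j\in[k]$, $T_j$ is uniformly distributed among subsets of size $s_j$ with $1\le s_j\le s$. Let $\bar T_l=\bigcup_{i=0}^l T_i$, $X_l=|\bar T_{l-1}\cap T_l|$ for $l\in[k]$, and $S=\sum_{j=0}^k s_j$. Then for every $t>\max\{6Ss/m_1,1\}$, $$\mathbb{P}\Big\{\sum_{i=1}^kX_i\ge tk\Big\}\le C_{\mathrm{hg}}^k\exp\Big(-\log\Big(\frac{t}{6Ss/m_1}\Big)tk\Big).$$
   Context: $[m]=\{1,\dots,m\}$. *)

(* Defs.v *)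
From mathcomp Require Import all_boot.
From Stdlib Require Import Reals.

Set Implicit Arguments.
Unset Strict Implicit.
Unset Printing Implicit Defensive.

(* Independence + uniformity of each T_j
   means the joint law is the uniform distribution on this finite set. *)
Definition sample_space (m1 k : nat) (sz : nat -> nat)
  : {set {ffun 'I_k.+1 -> {set 'I_m1}}} :=
  [set T : {ffun 'I_k.+1 -> {set 'I_m1}} | [forall j : 'I_k.+1, #|T j| == sz j]].

Definition X (m1 k : nat) (T : {ffun 'I_k.+1 -> {set 'I_m1}}) (l : 'I_k.+1) : nat :=
  #|(\bigcup_(i < k.+1 | (i < l)%N) T i) :&: T l|.

Definition Xsum (m1 k : nat) (T : {ffun 'I_k.+1 -> {set 'I_m1}}) : nat :=
  (\sum_(l < k.+1 | (0 < l)%N) X T l)%N.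

Definition prob (m1 k : nat) (sz : nat -> nat)
  (E : pred {ffun 'I_k.+1 -> {set 'I_m1}}) : R :=
  Rdiv (INR #|[set T in sample_space m1 k sz | E T]|) (INR #|sample_space m1 k sz|).
Arguments prob m1 k sz E : clear implicits.

(* Main.v *)
Require Import Defs.
From Stdlib Require Import Reals Lra.

Lemma aux (x a b c d y : R) : (0<=x -> 0<=a -> a<=b -> 0<=c -> c<=d -> 0<=y -> x*(a*y)*c <= x*b*d*y)%R.
Proof.
intros. replace (x*(a*y)*c)%R with ((x*y)*(a*c))%R by ring.
replace (x*b*d*y)%R with ((x*y)*(b*d))%R by ring.
apply Rmult_le_compat_l. now apply Rmult_le_pos.
apply Rmult_le_compat; lra.
Qed.
From mathcomp Require Import all_boot all_order all_algebra.
From mathcomp Require Import Rstruct zify.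
Set Implicit Arguments. Unset Strict Implicit. Unset Printing Implicit Defensive.
Import Order.TTheory GRing.Theory Num.Theory.
Lemma card_supsets (T : finType) (W : {set T}) b : #|W| <= b ->
  #|[set B : {set T} | (#|B| == b) && (W \subset B)]| = 'C(#|T| - #|W|, b - #|W|).
Proof.
move=> Wb.
have -> : [set B : {set T} | (#|B| == b) && (W \subset B)] =
   (fun B' : {set T} => B' :|: W) @: [set B' : {set T} | B' \subset ~: W & #|B'| == b - #|W|].
  apply/setP => B; rewrite inE; apply/andP/imsetP.
    move=> [/eqP Bb WB]; exists (B :\: W).
      rewrite inE; apply/andP; split; first by apply/subsetP => x; rewrite !inE => /andP[].
      by rewrite cardsD (setIidPr WB) Bb.
    by rewrite setDE setUIl [~: W :|: W]setUC setUCr setIT; apply/esym/setUidPl.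
  move=> [B' + ->]; rewrite inE => /andP [B'W /eqP cB']; split; last exact: subsetUr.
  rewrite cardsU cB'.
  have -> : B' :&: W = set0.
    apply/setP => x; rewrite !inE; apply/negbTE; apply/negP => /andP[xB xW].
    by move: (subsetP B'W x xB); rewrite inE xW.
  by rewrite cards0 subn0 subnK.
rewrite card_in_imset; last first.
  move=> B1 B2; rewrite !inE => /andP[B1W _] /andP[B2W _] E.
  have K : forall B' : {set T}, B' \subset ~: W -> (B' :|: W) :\: W = B'.
    move=> B' HB; apply/setP => x; rewrite !inE; case xW: (x \in W) => /=.
      by apply/esym/negbTE/negP => xB; move: (subsetP HB x xB); rewrite inE xW.
    by rewrite orbF.
  by rewrite -(K _ B1W) E K.
by rewrite cards_draws cardsCs setCK.
Qed.
Lemma leq_expl a c e : a <= c -> a ^ e <= c ^ e.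
Proof. by move=> ac; elim: e => // e IH; rewrite !expnS leq_mul. Qed.

Lemma bin_ratio w m b : w <= b -> b <= m ->
  'C(m - w, b - w) * m ^ w <= 'C(m, b) * b ^ w.
Proof.
elim: w m b => [|w IH] m b; first by rewrite !subn0 !expn0 !muln1.
case: b => // b; case: m => // m; rewrite !ltnS => wb bm.
rewrite !subSS.
have IHw := IH m b wb bm.
have key := mul_bin_diag m.+1 b; rewrite /= in key.
case: (posnP m) => [m0|mpos].
  subst m; move: bm wb; rewrite leqn0 => /eqP -> ; rewrite leqn0 => /eqP ->.
  by rewrite bin0 binn.
have mw : 0 < m ^ w by rewrite expn_gt0 mpos.
rewrite -(leq_pmul2l mw).
apply: (@leq_trans ('C(m, b) * b ^ w * m.+1 ^ w.+1)).
  by rewrite mulnA [m ^ w * _]mulnC leq_mul2r IHw orbT.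
have bm2 : b * m.+1 <= b.+1 * m.
  nia.
have := leq_expl w bm2; rewrite !expnMn => H.
rewrite [m.+1 ^ w.+1]expnS [b.+1 ^ w.+1]expnS.
rewrite [X in _ <= X](_ : _ = (b.+1 * 'C(m.+1, b.+1)) * (b.+1 ^ w * m ^ w)); last first.
  lia.
rewrite -key.
rewrite [X in X <= _](_ : _ = ('C(m, b) * m.+1) * (b ^ w * m.+1 ^ w)); last first.
  lia.
by apply: leq_mul => //; rewrite mulnC.
Qed.
Local Open Scope ring_scope.
Lemma sum_subsets (T : finType) (C : {set T}) (x : R) :
  \sum_(W : {set T} | W \subset C) x ^+ #|W| = (1 + x) ^+ #|C|.
Proof.
have H := bigA_distr 1 +%R (fun i : T => if i \in C then x else 0) (fun _ => 1 : R).
rewrite (bigID (mem C)) /= in H.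
rewrite (eq_bigr (fun _ => x + 1)) ?prodr_const in H; last by move=> i ->.
rewrite (eq_bigr (fun _ => 1)) ?prodr_const ?expr1n ?mulr1 in H; last by move=> i /negbTE ->; rewrite add0r.
rewrite addrC H big_mkcond /=; apply: eq_bigr => J _.
rewrite (bigID (mem J)) /= [X in _ * X]big1 ?mulr1; last by move=> i /negbTE ->.
case: ifP => [JC|JC].
  rewrite (eq_bigr (fun _ => x)) ?prodr_const ?cardsE //.
  by move=> i iJ; rewrite iJ (subsetP JC i iJ).
have [i iJ iC] : exists2 i, i \in J & i \notin C.
  move/negbT: JC => /subsetPn [i iJ iC]; by exists i.
by rewrite (bigD1 i) //= iJ (negbTE iC) mul0r.
Qed.
Lemma card_sup_bound m (W : {set 'I_m}) b : (0 < m)%N -> (b <= m)%N ->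
  (#|[set B : {set 'I_m} | (#|B| == b) && (W \subset B)]|%:R : R)
    <= 'C(m, b)%:R * (b%:R / m%:R) ^+ #|W|.
Proof.
move=> m0 bm.
have m0R : (0 : R) < m%:R by rewrite ltr0n.
case: (leqP #|W| b) => Wb.
  rewrite card_supsets // card_ord.
  have H := bin_ratio (m := m) Wb bm.
  rewrite expr_div_n mulrA ler_pdivlMr; last by rewrite exprn_gt0.
  by rewrite -!natrX -!natrM ler_nat.
rewrite (_ : [set B | _] = set0) ?cards0.
  by apply: mulr_ge0; [rewrite ler0n | apply: exprn_ge0; apply: divr_ge0; rewrite ler0n].
apply/setP => B; rewrite !inE; apply/negbTE/negP => /andP[/eqP Bb WB].
by move: (subset_leq_card WB); rewrite Bb leqNgt Wb.
Qed.

Lemma key_step m (A : {set 'I_m}) b (x : R) : 0 <= x -> (0 < m)%N -> (b <= m)%N ->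
  \sum_(B : {set 'I_m} | #|B| == b) (1 + x) ^+ #|A :&: B|
    <= 'C(m, b)%:R * (1 + x * (b%:R / m%:R)) ^+ #|A|.
Proof.
move=> x0 m0 bm.
under eq_bigr => B _ do rewrite -sum_subsets.
rewrite (exchange_big_dep (fun W : {set 'I_m} => W \subset A)) /=; last first.
  by move=> B W _; rewrite subsetI => /andP[].
rewrite -sum_subsets mulr_sumr; apply: ler_sum => W WA.
rewrite (eq_bigl (mem [set B : {set 'I_m} | (#|B| == b) && (W \subset B)])); last first.
  by move=> B; rewrite !inE subsetI WA.
rewrite sumr_const exprMn mulrCA -[X in X <= _]mulr_natr.
apply: ler_wpM2l; first exact: exprn_ge0.
exact: card_sup_bound.
Qed.

Definition Ysum n m (A : {set 'I_m}) (T : {ffun 'I_n -> {set 'I_m}}) : nat :=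
  (\sum_(l < n) #|(A :|: \bigcup_(i < n | (i < l)%N) T i) :&: T l|)%N.

Definition fcons n m (B : {set 'I_m}) (T : {ffun 'I_n -> {set 'I_m}}) : {ffun 'I_n.+1 -> {set 'I_m}} :=
  [ffun i : 'I_n.+1 => if unlift ord0 i is Some j then T j else B].

Definition ftail n m (T : {ffun 'I_n.+1 -> {set 'I_m}}) : {ffun 'I_n -> {set 'I_m}} :=
  [ffun j => T (lift ord0 j)].

Lemma fcons0 n m B (T : {ffun 'I_n -> {set 'I_m}}) : fcons B T ord0 = B.
Proof. by rewrite ffunE unlift_none. Qed.

Lemma fconsS n m B (T : {ffun 'I_n -> {set 'I_m}}) j : fcons B T (lift ord0 j) = T j.
Proof. by rewrite ffunE liftK. Qed.

Lemma Ysum_cons n m (A B : {set 'I_m}) (T : {ffun 'I_n -> {set 'I_m}}) :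
  Ysum A (fcons B T) = (#|A :&: B| + Ysum (A :|: B) T)%N.
Proof.
rewrite /Ysum big_ord_recl /=; congr addn.
  by rewrite big_pred0 ?setU0 ?fcons0 // => i; rewrite ltn0.
apply: eq_bigr => j _; rewrite fconsS; congr (#|_ :&: _|).
rewrite big_mkcond big_ord_recl /= fcons0 -setUA; congr (_ :|: _).
rewrite [in RHS]big_mkcond; congr (_ :|: _); apply: eq_bigr => i _.
by rewrite fconsS /bump /= !add1n ltnS.
Qed.

Lemma sum_fcons n m (P : pred {ffun 'I_n.+1 -> {set 'I_m}}) (F : {ffun 'I_n.+1 -> {set 'I_m}} -> R) :
  \sum_(T | P T) F T =
  \sum_(B : {set 'I_m}) \sum_(T' : {ffun 'I_n -> {set 'I_m}} | P (fcons B T')) F (fcons B T').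
Proof.
rewrite pair_big_dep /=.
rewrite (reindex (fun p : {set 'I_m} * {ffun 'I_n -> {set 'I_m}} => fcons p.1 p.2)) //.
apply: onW_bij; exists (fun T : {ffun 'I_n.+1 -> {set 'I_m}} => (T ord0, ftail T)).
  move=> [B T] /=; rewrite fcons0; congr pair; apply/ffunP => j; by rewrite ffunE fconsS.
move=> T /=; apply/ffunP => i; case: (unliftP ord0 i) => [j ->|->].
  by rewrite fconsS ffunE.
by rewrite fcons0.
Qed.

Lemma cond_fcons n m (f : nat -> nat) B (T : {ffun 'I_n -> {set 'I_m}}) :
  [forall j : 'I_n.+1, #|fcons B T j| == f j] =
  (#|B| == f 0%N) && [forall j : 'I_n, #|T j| == f j.+1].
Proof.
apply/forallP/andP.
  move=> H; split; first by have := H ord0; rewrite fcons0.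
  by apply/forallP => j; have := H (lift ord0 j); rewrite fconsS lift0.
move=> [H0 /forallP H] j; case: (unliftP ord0 j) => [j' ->|->].
  by rewrite fconsS lift0; exact: H.
by rewrite fcons0.
Qed.

Lemma sum_ffun0 m (F : {ffun 'I_0 -> {set 'I_m}} -> R) (P : pred {ffun 'I_0 -> {set 'I_m}}) :
  P [ffun => set0] -> \sum_(T | P T) F T = F [ffun => set0].
Proof.
move=> HP; rewrite (big_pred1 [ffun => set0]) // => T /=.
have -> : T = [ffun => set0] by apply/ffunP => -[].
by rewrite eqxx HP.
Qed.

Lemma count_family m : forall n (f : nat -> nat),
  \sum_(T : {ffun 'I_n -> {set 'I_m}} | [forall j, #|T j| == f j]) (1 : R)
   = \prod_(i < n) ('C(m, f i))%:R.
Proof.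
elim=> [|n IH] f.
  by rewrite sum_ffun0 ?big_ord0 //; apply/forallP => -[].
rewrite sum_fcons big_ord_recl.
under eq_bigr => B _ do rewrite (eq_bigl _ _ (fun T => cond_fcons f B T)).
rewrite (bigID (fun B : {set 'I_m} => #|B| == f 0%N)) /= [X in _ + X]big1 ?addr0; last first.
  by move=> B /negbTE HB; rewrite big_pred0 // => T; rewrite HB.
rewrite (eq_bigr (fun B => \prod_(i < n) ('C(m, f i.+1))%:R)); last first.
  by move=> B HB; rewrite -(IH (fun i => f i.+1)); apply: eq_bigl => T; rewrite HB.
rewrite sumr_const -[in LHS]mulr_natl; congr (_ * _).
  have -> : #|(fun B : {set 'I_m} => #|B| == f 0%N)| = 'C(m, f 0%N) => //.
  by rewrite -[in RHS](card_ord m) -card_draws; apply: eq_card => B; rewrite inE.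
Qed.

Lemma exp_le (a b : R) : a <= b -> exp a <= exp b.
Proof.
move=> /RleP ab; apply/RleP; case: (Rle_lt_or_eq_dec _ _ ab) => [h|->].
  by apply: Rlt_le; apply: exp_increasing.
exact: Rle_refl.
Qed.

Lemma exp_ge0 (a : R) : 0 <= exp a.
Proof. by apply/RleP; apply: Rlt_le; apply: exp_pos. Qed.

Lemma pow_le_exp (y : R) (a : nat) : 0 <= y -> (1 + y) ^+ a <= exp (y *+ a).
Proof.
move=> y0; rewrite -expRX.
elim: a => [|a IH]; first by rewrite !expr0.
rewrite !exprS; apply: ler_pM => //.
- by apply: addr_ge0.
- by apply: exprn_ge0; apply: addr_ge0.
- by apply/RleP; apply: exp_ineq1_le.
Qed.

Lemma Zbound m s G (x : R) : 0 <= x -> (0 < m)%N -> forall n (f : nat -> nat) (A : {set 'I_m}),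
  (#|A| + \sum_(i < n) f i <= G)%N -> (forall i, (i < n)%N -> (f i <= s)%N && (f i <= m)%N) ->
  \sum_(T : {ffun 'I_n -> {set 'I_m}} | [forall j, #|T j| == f j]) (1 + x) ^+ Ysum A T
   <= (\prod_(i < n) ('C(m, f i))%:R) * (exp (x * s%:R * G%:R / m%:R)) ^+ n.
Proof.
move=> x0 m0; elim=> [|n IH] f A HG Hf.
  rewrite sum_ffun0; last by apply/forallP => -[].
  by rewrite /Ysum big_ord0 expr0 big_ord0 mulr1.
set q := exp _.
have q0 : 0 <= q by apply: exp_ge0.
rewrite sum_fcons big_ord_recl exprS.
under eq_bigr => B _ do rewrite (eq_bigl _ _ (fun T => cond_fcons f B T)).
rewrite (bigID (fun B : {set 'I_m} => #|B| == f 0%N)) /= [X in _ + X]big1 ?addr0; last first.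
  by move=> B /negbTE HB; rewrite big_pred0 // => T; rewrite HB.
set K : R := \prod_(i < n) ('C(m, f i.+1))%:R * q ^+ n.
have K0 : 0 <= K.
  by apply: mulr_ge0; [apply: prodr_ge0 => i _; rewrite ler0n | apply: exprn_ge0].
have x1 : 0 <= 1 + x by apply: addr_ge0.
rewrite big_ord_recl /= in HG.
apply: (@le_trans _ R (\sum_(B : {set 'I_m} | #|B| == f 0%N) (1 + x) ^+ #|A :&: B| * K)).
  apply: ler_sum => B HB.
  rewrite (eq_bigl (fun T : {ffun 'I_n -> {set 'I_m}} => [forall j : 'I_n, #|T j| == f j.+1])); last by move=> T; rewrite HB.
  under eq_bigr => T _ do rewrite Ysum_cons exprD.
  rewrite -mulr_sumr; apply: ler_wpM2l; first by apply: exprn_ge0.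
  apply: (IH (fun i => f i.+1) (A :|: B)).
    apply: leq_trans HG; rewrite addnA; apply: leq_add => //.
    by rewrite -(eqP HB) cardsU leq_subr.
  by move=> i ilt; apply: Hf.
rewrite -mulr_suml.
have Hf0 := Hf 0%N isT; case/andP: Hf0 => f0s f0m.
apply: (@le_trans _ _ ('C(m, f 0%N)%:R * (1 + x * ((f 0%N)%:R / m%:R)) ^+ #|A| * K)).
  by apply: ler_wpM2r => //; apply: key_step.
have Hq : (1 + x * ((f 0%N)%:R / m%:R)) ^+ #|A| <= q.
  have AG : (#|A| <= G)%N by apply: leq_trans HG; exact: leq_addr.
  have m0' : 0 <= (m%:R : R)^-1 by rewrite invr_ge0 ler0n.
  apply: le_trans (pow_le_exp _ _) _.
    by apply: mulr_ge0 => //; apply: mulr_ge0 => //; rewrite ler0n.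
  apply: exp_le; rewrite -[X in X <= _]mulr_natr; apply/RleP; apply: aux.
  - exact/RleP.
  - by apply/RleP; rewrite ler0n.
  - by apply/RleP; rewrite ler_nat.
  - by apply/RleP; rewrite ler0n.
  - by apply/RleP; rewrite ler_nat.
  - exact/RleP.
rewrite (_ : \prod_(i < n) ('C(m, f (bump 0 i)))%:R = \prod_(i < n) ('C(m, f i.+1))%:R) //.
have -> : 'C(m, f 0%N)%:R * \prod_(i < n) ('C(m, f i.+1))%:R * (q * q ^+ n) = 'C(m, f 0%N)%:R * q * K.
  by rewrite /K !mulrA; congr (_ * _); rewrite -!mulrA; congr (_ * _); rewrite mulrC.
apply: ler_wpM2r => //; apply: ler_wpM2l => //; rewrite ler0n.
Qed.

Lemma Xsum_Ysum m1 k (T : {ffun 'I_k.+1 -> {set 'I_m1}}) : Xsum T = Ysum set0 T.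
Proof.
rewrite /Xsum /Ysum big_mkcond; apply: eq_bigr => -[[|l] Hl] _ /=.
  by rewrite big_pred0 // setU0 set0I cards0.
by rewrite /X set0U.
Qed.

Lemma card_ss m1 k (sz : nat -> nat) :
  (#|sample_space m1 k sz|%:R : R) = \prod_(i < k.+1) ('C(m1, sz i))%:R.
Proof.
rewrite -count_family sumr_const; congr (_%:R); apply: eq_card => T.
by rewrite /sample_space inE.
Qed.

Lemma comb_bound m1 k s (sz : nat -> nat) (x c : R) (P : pred {ffun 'I_k.+1 -> {set 'I_m1}}) :
  0 <= x -> (0 < m1)%N ->
  (forall i, (i < k)%N -> (sz i.+1 <= s)%N && (sz i.+1 <= m1)%N) ->
  (forall T, P T -> c <= (1 + x) ^+ Xsum T) ->
  #|[set T in sample_space m1 k sz | P T]|%:R * c <=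
  #|sample_space m1 k sz|%:R *
    exp (x * s%:R * (\sum_(j < k.+1) sz j)%N%:R / m1%:R) ^+ k.
Proof.
move=> x0 m0 Hsz Hc.
have x1 : 0 <= 1 + x by apply: addr_ge0.
set q := exp _.
rewrite card_ss mulr_natl -sumr_const.
apply: (@le_trans _ R (\sum_(T in [set T in sample_space m1 k sz | P T]) (1 + x) ^+ Xsum T)).
  by apply: ler_sum => T; rewrite !inE => /andP[_ /Hc].
apply: (@le_trans _ R (\sum_(T : {ffun 'I_k.+1 -> {set 'I_m1}} | [forall j, #|T j| == sz j]) (1 + x) ^+ Ysum set0 T)).
  rewrite [X in X <= _]big_mkcond [X in _ <= X]big_mkcond /=; apply: ler_sum => T _.
  rewrite !inE Xsum_Ysum; case: [forall j, _]; case: (P T) => //=.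
  exact: exprn_ge0.
rewrite sum_fcons.
under eq_bigr => B _ do rewrite (eq_bigl _ _ (fun T => cond_fcons sz B T)).
rewrite (bigID (fun B : {set 'I_m1} => #|B| == sz 0%N)) /= [X in _ + X]big1 ?addr0; last first.
  by move=> B /negbTE HB; rewrite big_pred0 // => T; rewrite HB.
rewrite big_ord_recl -mulrA mulr_natl.
have -> : 'C(m1, sz ord0) = #|[set B : {set 'I_m1} | #|B| == sz 0%N]| by rewrite card_draws card_ord.
rewrite -sumr_const [X in _ <= X](eq_bigl (fun B : {set 'I_m1} => #|B| == sz 0%N)); last by move=> B; rewrite inE.
apply: ler_sum => B HB.
rewrite (eq_bigl (fun T : {ffun 'I_k -> {set 'I_m1}} => [forall j : 'I_k, #|T j| == sz j.+1])); last by move=> T; rewrite HB.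
under eq_bigr => T _ do rewrite Ysum_cons set0I cards0 add0n set0U.
apply: (@Zbound m1 s (\sum_(j < k.+1) sz j)%N x x0 m0 k (fun i => sz i.+1) B).
  by rewrite big_ord_recl (eqP HB).
exact: Hsz.
Qed.

Lemma comb_bound_R m1 k s (sz : nat -> nat) (x c : R) (P : pred {ffun 'I_k.+1 -> {set 'I_m1}}) :
  Rle 0 x -> (0 < m1)%N ->
  (forall i, (i < k)%N -> (sz i.+1 <= s)%N && (sz i.+1 <= m1)%N) ->
  (forall T, P T -> Rle c (pow (Rplus 1 x) (Xsum T))) ->
  Rle (Rmult (INR #|[set T in sample_space m1 k sz | P T]|) c)
   (Rmult (INR #|sample_space m1 k sz|)
    (pow (exp (Rdiv (Rmult (Rmult x (INR s)) (INR (\sum_(j < k.+1) sz j)%N)) (INR m1))) k)).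
Proof.
move=> x0 m0 Hsz Hc; apply/RleP; rewrite !INRE RpowE.
apply: comb_bound => //; first exact/RleP.
by move=> T /Hc; rewrite RpowE => /RleP.
Qed.

Lemma card_ss_pos m1 k (sz : nat -> nat) : (forall i : 'I_k.+1, (sz i <= m1)%N) ->
  Rlt 0 (INR #|sample_space m1 k sz|).
Proof.
move=> H; apply/RltP; rewrite INRE card_ss; apply: prodr_gt0 => i _.
by rewrite ltr0n bin_gt0.
Qed.

Lemma exp_leS (a b : R) : Rle a b -> Rle (exp a) (exp b).
Proof. by move=> /RleP h; apply/RleP; apply: exp_le. Qed.

Close Scope ring_scope.
Delimit Scope R_scope with R.

Theorem proposition4p8 :
  exists C_hg : R, (1 < C_hg)%R /\
  forall (m1 k s : nat) (sz : nat -> nat),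
    (0 < m1)%N -> (0 < k)%N -> (0 < s)%N ->
    (sz 0 <= m1)%N ->
    (forall j, (1 <= j <= k)%N -> (1 <= sz j <= s)%N /\ (sz j <= m1)%N) ->
    let S := (\sum_(j < k.+1) sz j)%N in
    let r := (6 * INR S * INR s / INR m1)%R in
    forall t : R, (Rmax r 1 < t)%R ->
      (prob m1 k sz (fun T => if Rle_dec (t * INR k) (INR (Xsum T)) then true else false)
       <= C_hg ^ k * exp (- (ln (t / r)) * t * INR k))%R.
Proof.
exists 2%R; split; first lra.
move=> m1 k s sz m0 k0 s0 sz0 Hsz S r t Ht.
have Hsz' : forall i, (i < k)%N -> (sz i.+1 <= s)%N && (sz i.+1 <= m1)%N.
  move=> i ik; have [/andP[_ ->] ->] // := Hsz i.+1 ik.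
have Spos : (0 < S)%N.
  have := Hsz 1%N; rewrite leqnn k0 => /(_ isT) [/andP[h1 _] _].
  rewrite /S big_ord_recl; case: k {Hsz Hsz' Ht r S} k0 => // k' _.
  rewrite big_ord_recl; apply: leq_trans h1 _.
  rewrite addnCA; exact: leq_addr.
have SR : (0 < INR S)%R.
  apply: lt_0_INR; exact/ssrnat.ltP.
have sR : (0 < INR s)%R by apply: lt_0_INR; exact/ssrnat.ltP.
have mR : (0 < INR m1)%R by apply: lt_0_INR; exact/ssrnat.ltP.
have kR : (0 <= INR k)%R by apply: pos_INR.
have rpos : (0 < r)%R.
  rewrite /r; apply: Rdiv_lt_0_compat => //; apply: Rmult_lt_0_compat => //.
  apply: Rmult_lt_0_compat => //; lra.
have [rt t1] := proj1 (Rmax_Rlt _ _ _) Ht.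
have tr1 : (1 < t / r)%R.
  apply: (Rmult_lt_reg_r r) => //; rewrite /Rdiv Rmult_assoc Rinv_l; lra.
set lam := (6 * (t / r))%R.
have lam6 : (6 < lam)%R by rewrite /lam; lra.
set x := (lam - 1)%R.
have x0 : (0 <= x)%R by rewrite /x; lra.
have lnlam : (0 < ln lam)%R by rewrite -ln_1; apply: ln_increasing; lra.
set c := exp (t * INR k * ln lam).
have Hc : forall T : {ffun 'I_k.+1 -> {set 'I_m1}},
    (if Rle_dec (t * INR k) (INR (Xsum T)) then true else false) ->
    Rle c (pow (1 + x) (Xsum T)).
  move=> T; case: Rle_dec => // HT _.
  have -> : (1 + x = lam)%R by rewrite /x; ring.
  rewrite /c -(exp_ln (pow lam (Xsum T))); last by apply: pow_lt; lra.
  rewrite ln_pow; last lra.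
  apply: exp_leS; apply: Rmult_le_compat_r; lra.
have H := comb_bound_R x0 m0 Hsz' Hc.
rewrite -/S in H.
have bpos := @card_ss_pos m1 k sz.
have {bpos} bpos : (0 < INR #|sample_space m1 k sz|)%R.
  apply: bpos => -[[|i] Hi] //=.
  by have [_ ->] := Hsz i.+1 Hi.
have Qle : (pow (exp (x * INR s * INR S / INR m1)) k <= exp (t * INR k))%R.
  have -> : exp (t * INR k) = pow (exp t) k.
    rewrite -(exp_ln (pow (exp t) k)); last by apply: pow_lt; apply: exp_pos.
    by rewrite ln_pow; [rewrite ln_exp Rmult_comm | apply: exp_pos].
  apply: pow_incr; split; first by left; apply: exp_pos.
  apply: exp_leS.
  have -> : t = (lam * INR s * INR S / INR m1)%R.
    rewrite /lam /r; field; repeat split; lra.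
  apply: Rmult_le_compat_r; first by left; apply: Rinv_0_lt_compat.
  apply: Rmult_le_compat_r; first lra.
  apply: Rmult_le_compat_r; rewrite /x; lra.
set a := INR _ in H; set b := INR #|sample_space m1 k sz| in H bpos.
set Q := pow _ k in H Qle.
have cpos : (0 < c)%R by apply: exp_pos.
have apos : (0 <= a)%R by apply: pos_INR.
rewrite /prob -/a -/b.
have step1 : (a / b <= exp (t * INR k) / c)%R.
  have e1 : (a / b = (a*c) * / (b*c))%R by field; split; lra.
  have e2 : (exp (t * INR k) / c = (b * exp (t * INR k)) * / (b*c))%R by field; split; lra.
  rewrite e1 e2; apply: Rmult_le_compat_r; first by left; apply: Rinv_0_lt_compat; nra.
  apply: Rle_trans H _; apply: Rmult_le_compat_l; lra.
apply: Rle_trans step1 _.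
have ln6 : (1 < ln 6)%R.
  rewrite -{1}(ln_exp 1); apply: ln_increasing; first by apply: exp_pos.
  have := exp_le_3; lra.
have Llam : ln lam = (ln 6 + ln (t / r))%R by rewrite /lam ln_mult; lra.
have e3 : (exp (t * INR k) / c = exp (t * INR k - t * INR k * ln lam))%R.
  by rewrite /c /Rminus exp_plus exp_Ropp.
rewrite e3.
have tk : (0 <= t * INR k)%R by nra.
have E1 : (exp (t * INR k - t * INR k * ln lam) <= exp (- ln (t / r) * t * INR k))%R.
  apply: exp_leS; rewrite Llam; nra.
have p2 : (1 <= 2 ^ k)%R by apply: pow_R1_Rle; lra.
have := exp_pos (- ln (t / r) * t * INR k); nra.

Qed.
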